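(* Let $(G,M,\Delta)$ be a Garside structure, $(H,N,\delta)$ a parabolic substructure, $T$ the set of $(H,N)$-reduced elements of $G$, and $\mathcal S=\mathrm{Div}(\Delta)\setminus\{1\}$. Let $\alpha\in G$, $\beta\in\pi_H(\alpha)$ and $u\in\mathcal S$. Let $\theta\in T$ with $H\theta=H\alpha$, and assume $\theta\in M$. Then there exists $\beta'\in\pi_H(\alpha u)$ such that $d(\beta,\beta')\le3$.
   Context: Let $G$ be a group and $M$ a submonoid with $M\cap M^{-1}=\{1\}$. Define $\alpha\le_L\beta$ iff $\alpha^{-1}\beta\in M$, and $\alpha\le_R\beta$ iff $\beta\alpha^{-1}\in M$. For $a\in M$ let $\mathrm{Div}_L(a)=\{b\in M: b\le_L a\}$, $\mathrm{Div}_R(a)=\{b\in M: b\le_R a\}$; $a$ is balanced if these coincide, and then $\mathrm{Div}(a)$ denotes this set. $M$ is Noetherian if each $a\in M$ admits an $n$ such that $a$ is not a product of more than $n$ non-trivial factors. A Garside structure $(G,M,\Delta)$: $\Delta\in M$ balanced, $M$ Noetherian, $\mathrm{Div}(\Delta)$ finite and generating $M$ as a monoid and $G$ as a group, $(G,\le_L)$ a lattice with meet $\wedge_L$. A parabolic substructure $(H,N,\delta)$: $\delta\in M$ balanced, $H$ (resp. $N$) the subgroup (resp. submonoid) generated by $\mathrm{Div}(\delta)$, and $\mathrm{Div}(\delta)=\mathrm{Div}(\Delta)\cap N$; it is assumed $H\ne\{1\}$. Put $\omega=\delta^{-1}\Delta$. $a\in M$ is unmovable if $\Delta\not\le_L a$;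 every $\alpha\in G$ has a unique right $\Delta$-form $\alpha=a\Delta^p$ ($a\in M$ unmovable, $p\in\mathbb Z$). $a\in M$ is $N$-reduced if $a\wedge_L\delta=1$. $\alpha$ with right $\Delta$-form $a\Delta^p$ is $(H,N)$-reduced if $a$ is $N$-reduced and either $p=0$, or $p<0$ and $\omega\not\le_L a$. With $\lg$ the word length w.r.t. $\mathcal S$: $d(\alpha,\beta)=\lg(\alpha^{-1}\beta)$, $d(\alpha,H)=\min_{\beta\in H}d(\alpha,\beta)$, $\pi_H(\alpha)=\{\beta\in H:d(\alpha,\beta)=d(\alpha,H)\}$. *)

(* Defs.v *)
From Stdlib Require Import ZArith List.
Import ListNotations.
Set Implicit Arguments.

Record group := Group {
  carrier :> Type;
  gmul : carrier -> carrier -> carrier;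
  ginv : carrier -> carrier;
  gone : carrier;
  gmulA : forall x y z, gmul x (gmul y z) = gmul (gmul x y) z;
  gmul1l : forall x, gmul gone x = x;
  gmul1r : forall x, gmul x gone = x;
  gmulVl : forall x, gmul (ginv x) x = gone;
  gmulVr : forall x, gmul x (ginv x) = gone
}.

Section Garside.
Variable G : group.
Local Notation "x * y" := (gmul G x y).
Local Notation "x ^-1" := (ginv G x) (at level 3, format "x ^-1").
Local Notation "1" := (gone G).

Fixpoint prodl (l : list G) : G :=
  match l with [] => 1 | x :: l => x * prodl l end.

(** product of a list of letters x^{±1}: (true, x) stands for x^-1 *)
Fixpoint sprodl (l : list (bool * G)) : G :=
  match l with
  | [] => 1
  | (b, x) :: l => (if b then x^-1 else x) * sprodl l
  end.

Fixpoint gpow (x : G) (n : nat) : G :=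
  match n with O => 1 | S n => x * gpow x n end.

Definition zpow (x : G) (p : Z) : G :=
  match p with
  | Z0 => 1
  | Zpos n => gpow x (Pos.to_nat n)
  | Zneg n => (gpow x (Pos.to_nat n))^-1
  end.

Variable M : G -> Prop.

Definition pointed_submonoid : Prop :=
  M 1 /\ (forall x y, M x -> M y -> M (x * y)) /\
  (forall x, M x -> M (x^-1) -> x = 1).

Definition leL (x y : G) : Prop := M (x^-1 * y).
Definition leR (x y : G) : Prop := M (y * x^-1).

Definition DivL (a b : G) : Prop := M b /\ leL b a.
Definition DivR (a b : G) : Prop := M b /\ leR b a.

Definition balanced (a : G) : Prop :=
  M a /\ forall b, DivL a b <-> DivR a b.

(** for balanced a, Div(a) = Div_L(a) = Div_R(a) *)
Definition Div (a b : G) : Prop := DivL a b.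

Definition noetherian : Prop :=
  forall a, M a -> exists n : nat,
    forall l : list G, Forall (fun x => M x /\ x <> 1) l -> prodl l = a ->
      length l <= n.

Definition is_meetL (x y m : G) : Prop :=
  leL m x /\ leL m y /\ forall z, leL z x -> leL z y -> leL z m.
Definition is_joinL (x y j : G) : Prop :=
  leL x j /\ leL y j /\ forall z, leL x z -> leL y z -> leL j z.

Definition monoid_gen (S : G -> Prop) (g : G) : Prop :=
  exists l, Forall S l /\ prodl l = g.
Definition group_gen (S : G -> Prop) (g : G) : Prop :=
  exists l : list (bool * G), Forall (fun p => S (snd p)) l /\ sprodl l = g.

Definition garside (Delta : G) : Prop :=
  pointed_submonoid /\
  balanced Delta /\
  noetherian /\
  (exists l : list G, forall b, Div Delta b -> In b l) /\
  (forall a, M a <-> monoid_gen (Div Delta) a) /\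
  (forall g, group_gen (Div Delta) g) /\
  (forall x y, (exists m, is_meetL x y m) /\ (exists j, is_joinL x y j)).

Definition parabolic (Delta : G) (H N : G -> Prop) (delta : G) : Prop :=
  balanced delta /\
  (forall g, H g <-> group_gen (Div delta) g) /\
  (forall g, N g <-> monoid_gen (Div delta) g) /\
  (forall b, Div delta b <-> (Div Delta b /\ N b)) /\
  (exists h, H h /\ h <> 1).

Definition unmovable (Delta a : G) : Prop := M a /\ ~ leL Delta a.

Definition N_reduced (delta a : G) : Prop := is_meetL a delta 1.

(** α is (H,N)-reduced; the right Δ-form a Δ^p of α is unique in a
    Garside structure, so "some right Δ-form satisfies" = "the right
    Δ-form satisfies". *)
Definition HN_reduced (Delta delta alpha : G) : Prop :=
  exists (a : G) (p : Z),
    alpha = a * zpow Delta p /\ unmovable Delta a /\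
    N_reduced delta a /\
    (p = 0%Z \/ ((p < 0)%Z /\ ~ leL (delta^-1 * Delta) a)).

Definition Sgen (Delta s : G) : Prop := Div Delta s /\ s <> 1.

Definition lg_le (Delta g : G) (n : nat) : Prop :=
  exists l : list (bool * G),
    Forall (fun p => Sgen Delta (snd p)) l /\ sprodl l = g /\ length l <= n.

Definition dist_le (Delta alpha beta : G) (n : nat) : Prop :=
  lg_le Delta (alpha^-1 * beta) n.

Definition proj (Delta : G) (H : G -> Prop) (alpha beta : G) : Prop :=
  H beta /\ forall gamma, H gamma ->
    forall n, dist_le Delta alpha gamma n -> dist_le Delta alpha beta n.

Definition rcoset (H : G -> Prop) (g x : G) : Prop := exists h, H h /\ x = h * g.

End Garside.

Arguments prodl {G}. Arguments sprodl {G}. Arguments gpow {G}. Arguments zpow {G}.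
Arguments pointed_submonoid {G}. Arguments leL {G}. Arguments leR {G}.
Arguments DivL {G}. Arguments DivR {G}. Arguments balanced {G}. Arguments Div {G}.
Arguments noetherian {G}. Arguments is_meetL {G}. Arguments is_joinL {G}.
Arguments monoid_gen {G}. Arguments group_gen {G}. Arguments garside {G}.
Arguments parabolic {G}. Arguments unmovable {G}. Arguments N_reduced {G}.
Arguments HN_reduced {G}. Arguments Sgen {G}. Arguments lg_le {G}.
Arguments dist_le {G}. Arguments proj {G}. Arguments rcoset {G}.

(* Main.v *)
Require Import Defs.
From Stdlib Require Import ZArith List Lia Classical ClassicalEpsilon.
Import ListNotations.

Section Main.
Variable G : group.
Local Notation "x * y" := (gmul G x y).
Local Notation "x ^-1" := (ginv G x) (at level 3, format "x ^-1").
Local Notation one := (gone G).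

Lemma gAr (x y z : G) : (x * y) * z = x * (y * z).
Proof. rewrite gmulA; reflexivity. Qed.

Lemma cancL (x y : G) : x^-1 * (x * y) = y.
Proof. rewrite gmulA, gmulVl, gmul1l; reflexivity. Qed.
Lemma cancR (x y : G) : x * (x^-1 * y) = y.
Proof. rewrite gmulA, gmulVr, gmul1l; reflexivity. Qed.

Lemma inv_uniq (x y : G) : x * y = one -> y = x^-1.
Proof.
  intro E. rewrite <- (gmul1r _ (x^-1)), <- E, gmulA, gmulVl, gmul1l. reflexivity.
Qed.

Lemma invK (x : G) : (x^-1)^-1 = x.
Proof. symmetry. apply inv_uniq. apply gmulVl. Qed.

Lemma inv1 : one^-1 = one.
Proof. symmetry. apply inv_uniq. apply gmul1l. Qed.

Lemma inv_mul (x y : G) : (x * y)^-1 = y^-1 * x^-1.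
Proof. symmetry. apply inv_uniq. rewrite gAr, cancR, gmulVr. reflexivity. Qed.

Ltac gs := repeat (rewrite ?gAr, ?inv_mul, ?invK, ?inv1, ?gmul1l, ?gmul1r,
   ?gmulVl, ?gmulVr, ?cancL, ?cancR).

Lemma mul_cancl (g x y : G) : g * x = g * y -> x = y.
Proof. intro E. rewrite <- (cancL g x), E. gs. reflexivity. Qed.

Lemma gpow_add (x : G) a b : gpow x (a + b) = gpow x a * gpow x b.
Proof. induction a; simpl. gs; reflexivity. rewrite IHa. gs. reflexivity. Qed.

Lemma gpow_Sr (x : G) a : gpow x (S a) = gpow x a * x.
Proof. replace (S a) with (a + 1) by lia. rewrite gpow_add. simpl. gs. reflexivity. Qed.

Lemma gpow_comm (x : G) a : x * gpow x a = gpow x a * x.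
Proof. rewrite <- gpow_Sr. reflexivity. Qed.

Lemma gpow_comm2 (x : G) a b : gpow x a * gpow x b = gpow x b * gpow x a.
Proof. rewrite <- !gpow_add. f_equal. lia. Qed.

Fixpoint flipl (l : list (bool * G)) : list (bool * G) :=
  match l with [] => [] | (b, x) :: l => flipl l ++ [(negb b, x)] end.

Lemma sprodl_app (l1 l2 : list (bool * G)) : sprodl (l1 ++ l2) = sprodl l1 * sprodl l2.
Proof. induction l1 as [|[b x] l IH]; simpl. gs; reflexivity. rewrite IH. gs. reflexivity. Qed.

Lemma sprodl_flip l : sprodl (flipl l) = (sprodl l)^-1.
Proof.
  induction l as [|[b x] l IH]; simpl. gs; reflexivity.
  rewrite sprodl_app, IH. simpl. destruct b; simpl; gs; reflexivity.
Qed.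

Lemma flipl_snd (P : G -> Prop) l : Forall (fun p => P (snd p)) l -> Forall (fun p => P (snd p)) (flipl l).
Proof.
  induction l as [|[b x] l IH]; simpl; intros F. constructor.
  inversion F; subst. apply Forall_app. split. auto. constructor. simpl. auto. constructor.
Qed.

Lemma flipl_len l : length (flipl l) = length l.
Proof. induction l as [|[b x] l IH]; simpl. auto. rewrite length_app; simpl. lia. Qed.


Variable M : G -> Prop.
Variable Delta : G.
Variables (H N : G -> Prop) (delta : G).
Hypothesis hG : garside M Delta.
Hypothesis hP : parabolic M Delta H N delta.

Lemma M1 : M one. Proof. destruct hG as [[? ?] _]. auto. Qed.
Lemma Mmul x y : M x -> M y -> M (x * y). Proof. destruct hG as [[? [? ?]] _]. auto. Qed.
Lemma Mpt x : M x -> M x^-1 -> x = one. Proof. destruct hG as [[? [? ?]] _]. auto. Qed.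

Definition le (x y : G) := M (x^-1 * y).

Lemma le_refl x : le x x. Proof. unfold le. gs. apply M1. Qed.
Lemma le_trans x y z : le x y -> le y z -> le x z.
Proof. unfold le. intros A B. replace (x^-1 * z) with ((x^-1 * y) * (y^-1 * z)) by (gs; reflexivity). apply Mmul; auto. Qed.
Lemma le_anti x y : le x y -> le y x -> x = y.
Proof. unfold le. intros A B. assert (E : x^-1 * y = one). apply Mpt; auto. gs. auto.
  rewrite <- (cancR x y), E. gs. reflexivity. Qed.
Lemma le_lmul g x y : le x y <-> le (g * x) (g * y).
Proof. unfold le. gs. tauto. Qed.
Lemma le_lmul1 g x y : le x y -> le (g * x) (g * y). Proof. apply le_lmul. Qed.
Lemma le_lmul2 g x y : le (g * x) (g * y) -> le x y. Proof. apply le_lmul. Qed.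
Lemma le_1 x : le one x <-> M x. Proof. unfold le. gs. tauto. Qed.
Lemma le_r1 x : le x one <-> M x^-1. Proof. unfold le. gs. tauto. Qed.
Lemma le_mulM x m : M m -> le x (x * m). Proof. unfold le. gs. auto. Qed.
Lemma le_mulMi x m : M m -> le (x * m^-1) x. Proof. unfold le. gs. auto. Qed.

Lemma lat x y : (exists m, is_meetL M x y m) /\ (exists j, is_joinL M x y j).
Proof. destruct hG as [_ [_ [_ [_ [_ [_ L]]]]]]. apply L. Qed.

Definition meet x y := proj1_sig (constructive_indefinite_description _ (proj1 (lat x y))).
Definition join x y := proj1_sig (constructive_indefinite_description _ (proj2 (lat x y))).

Lemma meet_spec x y : is_meetL M x y (meet x y).
Proof. unfold meet. destruct (constructive_indefinite_description _ _). simpl. auto. Qed.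
Lemma join_spec x y : is_joinL M x y (join x y).
Proof. unfold join. destruct (constructive_indefinite_description _ _). simpl. auto. Qed.
Lemma meet_l x y : le (meet x y) x. Proof. apply (meet_spec x y). Qed.
Lemma meet_r x y : le (meet x y) y. Proof. apply (meet_spec x y). Qed.
Lemma meet_glb x y z : le z x -> le z y -> le z (meet x y). Proof. apply (meet_spec x y). Qed.
Lemma join_l x y : le x (join x y). Proof. apply (join_spec x y). Qed.
Lemma join_r x y : le y (join x y). Proof. apply (join_spec x y). Qed.
Lemma join_lub x y z : le x z -> le y z -> le (join x y) z. Proof. apply (join_spec x y). Qed.

Lemma bal_M d : balanced M d -> M d. Proof. intros [A _]; auto. Qed.

Lemma DivM d s : Div M d s -> M s. Proof. intros [A _]; auto. Qed.
Lemma Div_le d s : Div M d s -> le s d. Proof. intros [_ A]; auto. Qed.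
Lemma Div_mk d s : M s -> le s d -> Div M d s. Proof. intros; split; auto. Qed.
Lemma DivR_of d s : balanced M d -> Div M d s -> M (d * s^-1).
Proof. intros [_ B] A. apply B in A. destruct A as [_ A]. exact A. Qed.
Lemma Div_of_R d s : balanced M d -> M s -> M (d * s^-1) -> Div M d s.
Proof. intros [_ B] A C. apply B. split; auto. Qed.

Lemma conjL d s : balanced M d -> Div M d s -> Div M d (d^-1 * s * d).
Proof.
  intros Bd Ds. destruct Ds as [Ms Ls]. unfold leL in Ls.
  assert (Dt : Div M d (s^-1 * d)).
  { apply Div_of_R; auto. gs. auto. }
  destruct Dt as [_ Lt]. unfold leL in Lt.
  assert (E : (s^-1 * d)^-1 * d = d^-1 * s * d) by (gs; reflexivity).
  rewrite E in Lt. apply Div_of_R; auto. gs. auto.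
Qed.

Lemma conjR d s : balanced M d -> Div M d s -> Div M d (d * s * d^-1).
Proof.
  intros Bd Ds. pose proof (DivR_of _ _ Bd Ds) as R.
  assert (Dt : Div M d (d * s^-1)). { split; auto. unfold leL. gs. apply Ds. }
  pose proof (DivR_of _ _ Bd Dt) as R2. split.
  - revert R2; gs; auto.
  - unfold leL. gs. exact R.
Qed.

Lemma Div_one d : balanced M d -> Div M d one.
Proof. intros B. split. apply M1. unfold leL. gs. apply bal_M; auto. Qed.
Lemma Div_self d : balanced M d -> Div M d d.
Proof. intros B. split. apply bal_M; auto. unfold leL. gs. apply M1. Qed.


Lemma bD : balanced M Delta. Proof. destruct hG as [_ [B _]]. auto. Qed.
Lemma bd : balanced M delta. Proof. destruct hP as [B _]. auto. Qed.
Lemma Mgen a : M a <-> monoid_gen (Div M Delta) a.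
Proof. destruct hG as [_ [_ [_ [_ [A _]]]]]. apply A. Qed.
Lemma MD : M Delta. Proof. apply bal_M, bD. Qed.
Lemma Md : M delta. Proof. apply bal_M, bd. Qed.

Lemma prodl_P (P : G -> Prop) (f : G -> G) :
  P one -> (forall x y, P x -> P y -> P (x * y)) -> 
  forall (Q : G -> Prop) l, (forall s, Q s -> P s) -> Forall Q l -> P (prodl l).
Proof.
  intros P1 Pm Q l QP F. induction F; simpl. auto. apply Pm; auto.
Qed.

Lemma conjM_L x : M x -> M (Delta^-1 * x * Delta).
Proof.
  intros Mx. apply Mgen in Mx. destruct Mx as [l [F E]]. subst x.
  induction F; simpl. gs. apply M1.
  replace (Delta^-1 * (x * prodl l) * Delta) with ((Delta^-1 * x * Delta) * (Delta^-1 * prodl l * Delta)) by (gs; reflexivity).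
  apply Mmul; auto. apply (DivM Delta). apply conjL; auto. apply bD.
Qed.

Lemma conjM_R x : M x -> M (Delta * x * Delta^-1).
Proof.
  intros Mx. apply Mgen in Mx. destruct Mx as [l [F E]]. subst x.
  induction F; simpl. gs. apply M1.
  replace (Delta * (x * prodl l) * Delta^-1) with ((Delta * x * Delta^-1) * (Delta * prodl l * Delta^-1)) by (gs; reflexivity).
  apply Mmul; auto. apply (DivM Delta). apply conjR; auto. apply bD.
Qed.

Notation P k := (gpow Delta k).
Notation p k := (gpow delta k).

Lemma conjMP_L k x : M x -> M ((P k)^-1 * x * P k).
Proof.
  revert x; induction k; intros x Mx; simpl. gs. auto.
  replace ((Delta * P k)^-1 * x * (Delta * P k)) with ((P k)^-1 * (Delta^-1 * x * Delta) * P k) by (gs; reflexivity).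
  apply IHk, conjM_L, Mx.
Qed.
Lemma conjMP_R k x : M x -> M (P k * x * (P k)^-1).
Proof.
  revert x; induction k; intros x Mx; simpl. gs. auto.
  replace ((Delta * P k) * x * (Delta * P k)^-1) with (Delta * (P k * x * (P k)^-1) * Delta^-1) by (gs; reflexivity).
  apply conjM_R, IHk, Mx.
Qed.
Lemma MP k : M (P k).
Proof. induction k; simpl. apply M1. apply Mmul; auto. apply MD. Qed.

Lemma conjd_L k s : Div M delta s -> Div M delta ((p k)^-1 * s * p k).
Proof.
  revert s; induction k; intros s Ds; simpl. revert Ds; gs; auto.
  replace ((delta * p k)^-1 * s * (delta * p k)) with ((p k)^-1 * (delta^-1 * s * delta) * p k) by (gs; reflexivity).
  apply IHk, conjL, Ds. apply bd.
Qed.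
Lemma conjd_R k s : Div M delta s -> Div M delta (p k * s * (p k)^-1).
Proof.
  revert s; induction k; intros s Ds; simpl. revert Ds; gs; auto.
  replace ((delta * p k) * s * (delta * p k)^-1) with (delta * (p k * s * (p k)^-1) * delta^-1) by (gs; reflexivity).
  apply conjR, IHk, Ds. apply bd.
Qed.

Lemma Ngen g : N g <-> monoid_gen (Div M delta) g.
Proof. destruct hP as [_ [_ [A _]]]. apply A. Qed.
Lemma Hgen g : H g <-> group_gen (Div M delta) g.
Proof. destruct hP as [_ [A _]]. apply A. Qed.
Lemma Divd_iff b : Div M delta b <-> (Div M Delta b /\ N b).
Proof. destruct hP as [_ [_ [_ [A _]]]]. apply A. Qed.

Lemma N1 : N one. Proof. apply Ngen. exists []. split; auto. Qed.
Lemma Nmul x y : N x -> N y -> N (x * y).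
Proof. rewrite !Ngen. intros [l1 [F1 E1]] [l2 [F2 E2]]. exists (l1 ++ l2). split.
  apply Forall_app; auto. subst. clear F1 F2. induction l1; simpl. gs; reflexivity. rewrite IHl1. gs. reflexivity. Qed.
Lemma NDiv s : Div M delta s -> N s.
Proof. intros D. apply Ngen. exists [s]. split. auto. simpl. gs. reflexivity. Qed.
Lemma DivdD s : Div M delta s -> Div M Delta s. Proof. intros D. apply Divd_iff in D. tauto. Qed.
Lemma Divd_of s : Div M Delta s -> N s -> Div M delta s. Proof. intros. apply Divd_iff. auto. Qed.
Lemma NM x : N x -> M x.
Proof. intros Nx. apply Ngen in Nx. destruct Nx as [l [F E]]. subst. induction F; simpl. apply M1.
  apply Mmul; auto. apply (DivM delta); auto. Qed.
Lemma Np k : N (p k). Proof. induction k; simpl. apply N1. apply Nmul; auto. apply NDiv, Div_self, bd. Qed.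
Lemma Mp k : M (p k). Proof. apply NM, Np. Qed.

Lemma H1 : H one. Proof. apply Hgen. exists []. split; auto. Qed.
Lemma Hmul x y : H x -> H y -> H (x * y).
Proof. rewrite !Hgen. intros [l1 [F1 E1]] [l2 [F2 E2]]. exists (l1 ++ l2). split.
  apply Forall_app; auto. subst. apply sprodl_app. Qed.
Lemma Hinv x : H x -> H x^-1.
Proof. rewrite !Hgen. intros [l [F E]]. exists (flipl l). split. apply flipl_snd; auto.
  subst. apply sprodl_flip. Qed.
Lemma NH x : N x -> H x.
Proof. intros Nx. apply Ngen in Nx. destruct Nx as [l [F E]]. subst. induction F; simpl. apply H1.
  apply Hmul; auto. apply Hgen. exists [(false, x)]. split. constructor; auto. simpl. gs. reflexivity. Qed.


Lemma Hrep g : H g -> exists k n, N n /\ g = (p k)^-1 * n.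
Proof.
  intro Hg. apply Hgen in Hg. destruct Hg as [l [F E]]. subst g.
  induction F as [|[b s] l Ds F IH]; simpl in *.
  - exists 0, one. split. apply N1. simpl. gs. reflexivity.
  - destruct IH as [k [n [Nn E]]]. rewrite E. destruct b.
    + exists (S k), ((p k * (delta * s^-1) * (p k)^-1) * n). split.
      * apply Nmul; auto. apply NDiv, conjd_R. split. apply DivR_of; auto. apply bd.
        unfold leL. gs. apply Ds.
      * simpl. rewrite gpow_comm. gs. reflexivity.
    + exists k, ((p k * s * (p k)^-1) * n). split.
      * apply Nmul; auto. apply NDiv, conjd_R. auto.
      * gs. reflexivity.
Qed.

Lemma le_Delta_s s : Div M Delta s -> le Delta (s * Delta).
Proof. intros D. unfold le. pose proof (conjL _ _ bD D). apply DivM in H0. revert H0; gs; auto. Qed.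

Lemma keyF n : N n -> Div M delta (meet n Delta) /\ N ((meet n Delta)^-1 * n).
Proof.
  intro Nn. apply Ngen in Nn. destruct Nn as [l [F E]]. subst n.
  induction F as [|s l Ds F IH]; simpl in *.
  - assert (E : meet one Delta = one).
    { apply le_anti. apply meet_l. apply meet_glb. apply le_refl. apply le_1, MD. }
    rewrite E. split. apply Div_one, bd. gs. apply N1.
  - set (n' := prodl l) in *. set (t := meet n' Delta) in *. destruct IH as [Dt Nt].
    assert (Mn' : M n'). { apply NM. apply Ngen. exists l. auto. }
    set (d := meet (s * n') Delta).
    assert (sd : le s d). { apply meet_glb. apply le_mulM; auto. apply Div_le, DivdD, Ds. }
    assert (dst : le d (s * t)).
    { set (j := join d s). apply le_trans with j. apply join_l.
      apply le_lmul with (g := s^-1). replace (s^-1 * (s * t)) with t by (gs; reflexivity).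
      apply meet_glb.
      - apply le_lmul with (g := s). gs. apply join_lub. apply meet_l. apply le_mulM; auto.
      - apply le_lmul with (g := s). gs. apply join_lub.
        + apply le_trans with Delta. apply meet_r. apply le_Delta_s, DivdD, Ds.
        + apply le_mulM, MD. }
    set (r' := s^-1 * d).
    assert (Dr' : Div M delta r').
    { split. apply sd. unfold leL. apply le_trans with t. apply le_lmul with (g := s). unfold r'. gs. exact dst.
      apply Div_le, Dt. }
    assert (Nd : N d). { replace d with (s * r') by (unfold r'; gs; reflexivity). apply Nmul; apply NDiv; auto. }
    split.
    + apply Divd_of; auto. split. apply NM; auto. apply meet_r.
    + replace (d^-1 * (s * n')) with ((r'^-1 * t) * (t^-1 * n')) by (unfold r'; gs; reflexivity).
      apply Nmul; auto. apply NDiv. split.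
      * apply le_lmul with (g := s). unfold r'. gs. exact dst.
      * unfold leL. replace ((r'^-1 * t)^-1 * delta) with ((t^-1 * delta) * (delta^-1 * r' * delta)) by (gs; reflexivity).
        apply Mmul. apply Dt. apply DivM with delta. apply conjL. apply bd. auto.
Qed.

Lemma keyE s n : M s -> le s Delta -> N n -> le s n -> N (s^-1 * n).
Proof.
  intros Ms sD Nn sn. destruct (keyF n Nn) as [Dr Nr]. set (r := meet n Delta) in *.
  assert (sr : le s r) by (apply meet_glb; auto).
  assert (Ds : Div M delta s). { split; auto. apply le_trans with r; auto. apply Div_le; auto. }
  replace (s^-1 * n) with ((s^-1 * r) * (r^-1 * n)) by (gs; reflexivity).
  apply Nmul; auto. apply NDiv. split. exact sr.
  unfold leL. replace ((s^-1 * r)^-1 * delta) with ((r^-1 * delta) * (delta^-1 * s * delta)) by (gs; reflexivity).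
  apply Mmul. apply Dr. apply DivM with delta. apply conjL. apply bd. auto.
Qed.

Lemma keyC x n : M x -> N n -> le x n -> N x.
Proof.
  intros Mx. apply Mgen in Mx. destruct Mx as [l [F E]]. subst x. revert n.
  induction F as [|s l Ds F IH]; simpl; intros n Nn xn. apply N1.
  assert (Ml : M (prodl l)). { apply Mgen. exists l. auto. }
  assert (sn : le s n). { apply le_trans with (s * prodl l); auto. apply le_mulM; auto. }
  assert (Ds' : Div M delta s).
  { destruct (keyF n Nn) as [Dr _]. split. apply DivM with Delta; auto.
    apply le_trans with (meet n Delta). apply meet_glb; auto. apply Div_le; auto. apply Div_le; auto. }
  apply Nmul. apply NDiv; auto. apply (IH (s^-1 * n)).
  apply keyE; auto. apply DivM with Delta; auto. apply Div_le; auto.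
  apply le_lmul with (g := s). gs. auto.
Qed.

Lemma keyA' a n : N a -> N n -> le a n -> N (a^-1 * n).
Proof.
  intros Na. apply Ngen in Na. destruct Na as [l [F E]]. subst a. revert n.
  induction F as [|s l Ds F IH]; simpl; intros n Nn an. gs. auto.
  assert (Ml : M (prodl l)). { apply NM, Ngen. exists l. auto. }
  assert (sn : le s n). { apply le_trans with (s * prodl l); auto. apply le_mulM; auto. }
  replace ((s * prodl l)^-1 * n) with ((prodl l)^-1 * (s^-1 * n)) by (gs; reflexivity).
  apply IH. apply keyE; auto. apply DivM with delta; auto. apply Div_le, DivdD; auto.
  apply le_lmul with (g := s). gs. auto.
Qed.

Lemma keyA h : H h -> M h -> N h.
Proof.
  intros Hh Mh. destruct (Hrep h Hh) as [k [n [Nn E]]]. subst h. apply keyA'; auto. apply Np. 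
Qed.

Lemma Npow n : N n -> exists K, le n (p K).
Proof.
  intros Nn. apply Ngen in Nn. destruct Nn as [l [F E]]. subst n.
  induction F as [|s l Ds F IH]; simpl. exists 0. apply le_refl.
  destruct IH as [K HK]. exists (S K). apply le_trans with (s * p K). apply le_lmul1; auto.
  simpl. unfold le. replace ((s * p K)^-1 * (delta * p K)) with ((p K)^-1 * (s^-1 * delta) * p K) by (gs; reflexivity).
  apply DivM with delta. apply conjd_L. split. apply Ds. unfold leL. pose proof (conjL _ _ bd Ds) as C. apply DivM in C. revert C. gs. auto.
Qed.

Lemma le_pp a b : le (p a) (p (a + b)).
Proof. unfold le. rewrite gpow_add. gs. apply Mp. Qed.

Lemma keyJ a b : N a -> N b -> N (join a b).
Proof.
  intros Na Nb. destruct (Npow a Na) as [Ka HA]. destruct (Npow b Nb) as [Kb HB].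
  apply keyC with (p (Ka + Kb)).
  - apply le_1. apply le_trans with a. apply le_1, NM; auto. apply join_l.
  - apply Np.
  - apply join_lub. apply le_trans with (p Ka); auto. apply le_pp.
    apply le_trans with (p Kb); auto. rewrite Nat.add_comm. apply le_pp.
Qed.

Lemma keyJH x y : H x -> H y -> H (join x y).
Proof.
  intros Hx Hy. destruct (Hrep x Hx) as [k [a [Na Ea]]]. destruct (Hrep y Hy) as [l [b [Nb Eb]]].
  set (a' := p l * a). set (b' := p k * b).
  assert (Ex : x = (p (k + l))^-1 * a').
  { unfold a'. rewrite Ea, gpow_add, gpow_comm2. gs. reflexivity. }
  assert (Ey : y = (p (k + l))^-1 * b').
  { unfold b'. rewrite Eb, gpow_add. gs. reflexivity. }
  set (K := k + l) in *.
  assert (E : join x y = (p K)^-1 * join a' b').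
  { apply le_anti.
    - apply join_lub; [rewrite Ex | rewrite Ey]; apply le_lmul1; [apply join_l | apply join_r].
    - apply le_lmul with (g := p K). gs. apply join_lub.
      + apply le_lmul with (g := (p K)^-1). gs. rewrite <- Ex. apply join_l.
      + apply le_lmul with (g := (p K)^-1). gs. rewrite <- Ey. apply join_r. }
  rewrite E. apply Hmul. apply Hinv, NH, Np. apply NH, keyJ; apply Nmul; auto; apply Np.
Qed.

Definition red (th : G) := forall z, le z th -> le z delta -> le z one.

Lemma keyR th e : red th -> N e -> le e th -> e = one.
Proof.
  intros R Ne. apply Ngen in Ne. destruct Ne as [l [F E]]. subst e.
  induction F as [|s l Ds F IH]; simpl; intros L. reflexivity.
  assert (Ml : M (prodl l)). { apply NM, Ngen. exists l. auto. }
  assert (s1 : s = one).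
  { apply Mpt. apply DivM with delta; auto. apply le_r1. apply R.
    apply le_trans with (s * prodl l); auto. apply le_mulM; auto. apply Div_le; auto. }
  subst s. rewrite gmul1l in *. auto.
Qed.

Lemma keyP th x g : M th -> red th -> H g -> le x th -> le x g -> le x one.
Proof.
  intros Mth R Hg xth xg. destruct (Hrep g Hg) as [k [n [Nn E]]]. subst g.
  set (z := meet (p k * th) n).
  assert (Nz : N z).
  { apply keyC with n; auto. apply le_1. apply meet_glb; apply le_1; auto. apply Mmul; auto. apply Mp. apply NM; auto.
    apply meet_r. }
  set (J := join z (p k)).
  assert (NJ : N J) by (apply keyJ; auto; apply Np).
  assert (Ne : N ((p k)^-1 * J)). { apply keyA'; auto. apply Np. apply join_r. }
  assert (e1 : (p k)^-1 * J = one).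
  { apply (keyR th); auto. apply le_lmul with (g := p k). gs. apply join_lub. apply meet_l. apply le_mulM; auto. }
  assert (EJ : J = p k). { rewrite <- (cancR (p k) J), e1. gs. reflexivity. }
  assert (xz : le (p k * x) z). { apply meet_glb. apply le_lmul1; auto. apply le_lmul with (g := (p k)^-1). gs. auto. }
  assert (zp : le z (p k)) by (rewrite <- EJ; apply join_l).
  apply le_lmul with (g := p k). rewrite gmul1r. apply le_trans with z; auto.
Qed.


Lemma W2O g n : lg_le M Delta g n -> exists i s, i + s <= n /\ le (P i)^-1 g /\ le g (P s).
Proof.
  intros [l [F [E L]]]. subst g.
  cut (exists i s, i + s <= length l /\ le (P i)^-1 (sprodl l) /\ le (sprodl l) (P s)).
  { intros [i [s [A B]]]. exists i, s. split. lia. auto. }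
  clear L. induction F as [|[b t] l [Dt t1] F IH]; simpl in *.
  - exists 0, 0. simpl. split. lia. split; unfold le; gs; apply M1.
  - destruct IH as [i [s [L [A B]]]]. destruct b.
    + exists (S i), s. split. lia. split.
      * apply le_trans with (t^-1 * (P i)^-1). 
        -- unfold le. rewrite gpow_Sr.
           replace (((P i * Delta)^-1)^-1 * (t^-1 * (P i)^-1)) with (P i * (Delta * t^-1) * (P i)^-1) by (gs; reflexivity).
           apply conjMP_R. apply DivR_of; auto. apply bD.
        -- apply le_lmul1; auto.
      * apply le_trans with (t^-1 * P s). apply le_lmul1; auto.
        unfold le. replace ((t^-1 * P s)^-1 * P s) with ((P s)^-1 * t * P s) by (gs; reflexivity).
        apply conjMP_L. apply DivM with Delta; auto.
    + exists i, (S s). split. lia. split.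
      * apply le_trans with (t * (P i)^-1).
        -- unfold le. replace (((P i)^-1)^-1 * (t * (P i)^-1)) with (P i * t * (P i)^-1) by (gs; reflexivity).
           apply conjMP_R. apply DivM with Delta; auto.
        -- apply le_lmul1; auto.
      * apply le_trans with (t * P s). apply le_lmul1; auto.
        unfold le. replace ((t * P s)^-1 * P (S s)) with ((P s)^-1 * (t^-1 * Delta) * P s) by (simpl; gs; reflexivity).
        apply conjMP_L. apply Div_le with (d := Delta); auto.
Qed.

Lemma lg_mono g n m : lg_le M Delta g n -> n <= m -> lg_le M Delta g m.
Proof. intros [l [F [E L]]] nm. exists l. split; auto. split; auto. lia. Qed.

Lemma lg_app1 g (b : bool) t n : lg_le M Delta g n -> Div M Delta t ->
  lg_le M Delta (g * (if b then t^-1 else t)) (S n).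
Proof.
  intros [l [F [E L]]] Dt. destruct (classic (t = one)) as [T1|T1].
  - subst t. exists l. split; auto. split. rewrite E. destruct b; gs; reflexivity. lia.
  - exists (l ++ [(b, t)]). split. apply Forall_app. split; auto. constructor. split; auto. constructor.
    split. rewrite sprodl_app, E. simpl. gs. reflexivity. rewrite length_app. simpl. lia.
Qed.

Lemma O2W n : forall i s g, i + s = n -> le (P i)^-1 g -> le g (P s) -> lg_le M Delta g n.
Proof.
  induction n as [|n IH]; intros i s g E A B.
  - assert (i = 0) by lia. assert (s = 0) by lia. subst. simpl in *.
    assert (g = one). { apply le_anti; auto. revert A; unfold le; gs; auto. }
    subst. exists []. simpl. repeat split; auto.
  - destruct s as [|s'].
    + destruct i as [|i']. lia. simpl in B.
      set (y := join g (P i')^-1).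
      assert (yl : le y one). { apply join_lub; auto. unfold le. gs. apply MP. }
      assert (Ly : lg_le M Delta y n). { apply (IH i' 0). lia. apply join_r. exact yl. }
      set (t := g^-1 * y).
      assert (Dt : Div M Delta t).
      { split. apply join_l. unfold leL.
        assert (ygD : le y (g * Delta)).
        { apply join_lub. apply le_mulM, MD.
          unfold le. replace (((P i')^-1)^-1 * (g * Delta)) with (Delta^-1 * (((P (S i'))^-1)^-1 * g) * Delta) by (simpl; gs; reflexivity).
          apply conjM_L. exact A. }
        unfold le in ygD. unfold t. revert ygD. gs. auto. }
      replace g with (y * t^-1) by (unfold t; gs; reflexivity).
      apply (lg_app1 y true t n); auto.
    + set (y := meet g (P s')).
      assert (Ly : lg_le M Delta y n).
      { apply (IH i s'); auto. lia. apply meet_glb; auto. unfold le. gs. rewrite <- gpow_add. apply MP. apply meet_r. }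
      set (t := y^-1 * g).
      assert (Dt : Div M Delta t).
      { split. apply meet_l. unfold leL.
        assert (gy : le (g * Delta^-1) y).
        { apply meet_glb. apply le_mulMi, MD.
          unfold le. rewrite gpow_Sr in B. unfold le in B.
          replace ((g * Delta^-1)^-1 * P s') with (Delta * (g^-1 * (P s' * Delta)) * Delta^-1) by (gs; reflexivity).
          apply conjM_R. exact B. }
        unfold le in gy. unfold t.
        replace ((y^-1 * g)^-1 * Delta) with (Delta^-1 * ((g * Delta^-1)^-1 * y) * Delta) by (gs; reflexivity).
        apply conjM_L. exact gy. }
      replace g with (y * t) by (unfold t; gs; reflexivity).
      apply (lg_app1 y false t n); auto.
Qed.

Lemma lg_any g : exists n, lg_le M Delta g n.
Proof.
  destruct hG as [_ [_ [_ [_ [_ [GG _]]]]]]. destruct (GG g) as [l [F E]]. subst g.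
  induction F as [|[b t] l Dt F IH]; simpl in *.
  - exists 0. exists []. simpl. repeat split; auto.
  - destruct IH as [n [l' [F' [E' L']]]]. exists (S n).
    destruct (classic (t = one)) as [T1|T1].
    + subst t. exists l'. split; auto. split. rewrite E'. destruct b; gs; reflexivity. lia.
    + exists ((b, t) :: l'). split. constructor; auto. split; auto. split. simpl. rewrite E'. reflexivity. simpl. lia.
Qed.

Lemma nat_min (Q : nat -> Prop) : (exists n, Q n) -> exists n, Q n /\ forall m, Q m -> n <= m.
Proof.
  intros [n Qn]. revert Qn. induction n as [n IH] using (well_founded_induction Nat.lt_wf_0).
  intros Qn. destruct (classic (exists m, m < n /\ Q m)) as [[m [Hm Qm]]|No].
  - apply (IH m Hm Qm).
  - exists n. split; auto. intros m Qm. destruct (Nat.le_gt_cases n m); auto. exfalso. apply No. eauto.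
Qed.


Lemma le_sh x y g : le (g * x) y <-> le x (g^-1 * y).
Proof. unfold le. gs. tauto. Qed.
Lemma le_sh2 x y g : le (g^-1 * x) y <-> le x (g * y).
Proof. unfold le. gs. tauto. Qed.
Lemma le_rD x y : le x y -> le (x * Delta) (y * Delta).
Proof. unfold le. intros A. replace ((x * Delta)^-1 * (y * Delta)) with (Delta^-1 * (x^-1 * y) * Delta) by (gs; reflexivity).
  apply conjM_L; auto. Qed.
Lemma Pinv_comm k : (P k)^-1 * Delta = Delta * (P k)^-1.
Proof. apply mul_cancl with (g := P k). gs. rewrite <- gAr, <- gpow_comm. gs. reflexivity. Qed.

Lemma lg_cons1 g (b : bool) t n : lg_le M Delta g n -> Div M Delta t ->
  lg_le M Delta ((if b then t^-1 else t) * g) (S n).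
Proof.
  intros [l [F [E L]]] Dt. destruct (classic (t = one)) as [T1|T1].
  - subst t. exists l. split; auto. split. rewrite E. destruct b; gs; reflexivity. lia.
  - exists ((b, t) :: l). split. constructor; auto. split; auto. split. simpl. rewrite E. reflexivity. simpl. lia.
Qed.

Lemma lg0 : lg_le M Delta one 0.
Proof. exists []. simpl. repeat split; auto. Qed.

Lemma main alpha beta u theta :
    proj M Delta H alpha beta ->
    Sgen M Delta u ->
    HN_reduced M Delta delta theta ->
    (forall x, rcoset H theta x <-> rcoset H alpha x) ->
    M theta ->
    exists beta' : G,
      proj M Delta H (alpha * u) beta' /\ dist_le M Delta beta beta' 3.
Proof.
  intros [Hbeta Pmin] [Du u1] Hred Hcos Mth.
  assert (Mu : M u) by (apply DivM with Delta; auto).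
  assert (thred : red theta).
  { destruct Hred as [a [z [Eth [[Ma Unm] [Nr Hz]]]]].
    destruct z as [|q|q].
    - simpl in Eth. rewrite gmul1r in Eth. subst a. exact (proj2 (proj2 Nr)).
    - exfalso. destruct Hz as [Hz|[Hz _]]; [discriminate | lia].
    - exfalso. apply Unm. simpl in Eth.
      assert (Ea : a = theta * P (Pos.to_nat q)) by (rewrite Eth; gs; reflexivity).
      rewrite Ea. pose proof (Pos2Nat.is_pos q) as Pq.
      destruct (Pos.to_nat q) as [|m]. lia. simpl. unfold leL.
      replace (Delta^-1 * (theta * (Delta * P m))) with ((Delta^-1 * theta * Delta) * P m) by (gs; reflexivity).
      apply Mmul. apply conjM_L; auto. apply MP. }
  destruct (proj2 (Hcos alpha)) as [h [Hh Eal]].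
  { exists one. split. apply H1. gs. reflexivity. }
  destruct (nat_min (fun n => dist_le M Delta alpha beta n) (lg_any _)) as [D [HD Dmin]].
  set (b0 := h^-1 * beta).
  assert (Hb0 : H b0) by (apply Hmul; auto; apply Hinv; auto).
  assert (Eab : alpha^-1 * beta = theta^-1 * b0) by (unfold b0; rewrite Eal; gs; reflexivity).
  assert (Lower : forall g0 j, H g0 -> le (theta * (P j)^-1) g0 -> D <= j).
  { intros g0 j Hg0 L0.
    assert (L1 : le (theta * (P j)^-1) one).
    { apply (keyP theta _ g0); auto. apply le_mulMi, MP. }
    assert (Lg : lg_le M Delta (theta^-1) (j + 0)).
    { apply (O2W (j + 0) j 0). reflexivity.
      - apply le_lmul with (g := theta). rewrite gmulVr. exact L1.
      - simpl. unfold le. gs. auto. }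
    apply Dmin. apply (Pmin h Hh). unfold dist_le.
    replace (alpha^-1 * h) with (theta^-1) by (rewrite Eal; gs; reflexivity).
    apply lg_mono with (j + 0); [exact Lg | lia]. }
  destruct (W2O _ _ HD) as [i [s [Lis [A1 A2]]]]. rewrite Eab in A1, A2.
  assert (Di : D <= i).
  { apply (Lower b0 i Hb0). apply (proj2 (le_sh _ _ theta)). exact A1. }
  assert (i = D) by lia. assert (s = 0) by lia. subst i s.
  assert (B1 : le (theta * (P D)^-1) b0) by (apply (proj2 (le_sh _ _ theta)); exact A1).
  assert (B2 : le b0 theta).
  { simpl in A2. apply le_sh2 in A2. rewrite gmul1r in A2. exact A2. }
  assert (Up : forall gamma m, H gamma -> dist_le M Delta (alpha * u) gamma m ->
     exists j s, j + s <= m /\ D <= j /\ le (theta * (u * (P j)^-1)) (h^-1 * gamma)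
        /\ le (h^-1 * gamma) (theta * (u * P s))).
  { intros gamma m Hga Hd. destruct (W2O _ _ Hd) as [j [s [L [C1 C2]]]].
    replace ((alpha * u)^-1 * gamma) with ((theta * u)^-1 * (h^-1 * gamma)) in C1, C2
      by (rewrite Eal; gs; reflexivity).
    apply le_sh2 in C1. rewrite invK in C1. apply le_sh2 in C2. rewrite !gAr in C1, C2.
    exists j, s. split; auto. split; auto.
    apply (Lower (h^-1 * gamma)). apply Hmul; auto. apply Hinv; auto.
    apply le_trans with (theta * (u * (P j)^-1)); auto. apply le_lmul1.
    unfold le. replace (((P j)^-1)^-1 * (u * (P j)^-1)) with (P j * u * (P j)^-1) by (gs; reflexivity).
    apply conjMP_R; auto. }
  destruct (classic (exists g0, H g0 /\ le (theta * (u * (P D)^-1)) g0 /\ le g0 (theta * u))) as [[g0 [Hg0 [E1 E2]]]|NE].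
  - set (w := join b0 (theta * (u * (P D)^-1))).
    assert (Hw : H w).
    { set (J0 := join b0 g0).
      assert (HJ0 : H J0) by (apply keyJH; auto).
      assert (NJ : N (b0^-1 * J0)). { apply keyA. apply Hmul; auto. apply Hinv; auto. apply join_l. }
      assert (wJ : le w J0). { apply join_lub. apply join_l. apply le_trans with g0; auto. apply join_r. }
      assert (Ns : N (b0^-1 * w)). { apply keyC with (b0^-1 * J0); auto. apply join_l. apply le_lmul1; auto. }
      replace w with (b0 * (b0^-1 * w)) by (gs; reflexivity). apply Hmul; auto. apply NH; auto. }
    exists (h * w). split.
    + split. apply Hmul; auto. intros gamma Hga m Hd.
      destruct (Up gamma m Hga Hd) as [j [s [L [Dj _]]]].
      apply lg_mono with (D + 0); [|lia]. unfold dist_le.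
      replace ((alpha * u)^-1 * (h * w)) with ((theta * u)^-1 * w) by (rewrite Eal; gs; reflexivity).
      apply (O2W (D + 0) D 0). reflexivity.
      * apply le_sh. rewrite gAr. apply join_r.
      * apply le_sh2. simpl. rewrite gmul1r. apply join_lub.
        -- apply le_trans with theta; auto. apply le_mulM; auto.
        -- rewrite <- gAr. apply le_mulMi, MP.
    + unfold dist_le. replace (beta^-1 * (h * w)) with (b0^-1 * w) by (unfold b0; gs; reflexivity).
      apply lg_mono with 1; [|lia].
      replace (b0^-1 * w) with (one * (b0^-1 * w)) by (gs; reflexivity).
      apply (lg_app1 one false (b0^-1 * w) 0). apply lg0.
      split. apply join_l. unfold leL. apply (proj2 (le_sh2 w Delta b0)). apply join_lub.
      * apply le_mulM, MD.
      * apply le_trans with (theta * ((P D)^-1 * Delta)).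
        -- apply le_lmul1. unfold le.
           replace ((u * (P D)^-1)^-1 * ((P D)^-1 * Delta)) with (P D * (u^-1 * Delta) * (P D)^-1)
             by (rewrite Pinv_comm; gs; reflexivity).
           apply conjMP_R. apply Div_le with (d := Delta); auto.
        -- replace (theta * ((P D)^-1 * Delta)) with ((theta * (P D)^-1) * Delta) by (gs; reflexivity).
           apply le_rD; auto.
  - exists beta. split.
    + split; auto. intros gamma Hga m Hd.
      destruct (Up gamma m Hga Hd) as [j [s [L [Dj [U1 U2]]]]].
      destruct (Nat.le_gt_cases m D) as [mD|mD].
      * exfalso. assert (j = D) by lia. assert (s = 0) by lia. subst j s. apply NE.
        exists (h^-1 * gamma). split. apply Hmul; auto. apply Hinv; auto. split; auto.
        simpl in U2. rewrite gmul1r in U2. exact U2.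
      * apply lg_mono with (S D); [|lia]. unfold dist_le.
        replace ((alpha * u)^-1 * beta) with (u^-1 * (alpha^-1 * beta)) by (gs; reflexivity).
        apply (lg_cons1 _ true u D); auto.
    + unfold dist_le. rewrite gmulVl. apply lg_mono with 0. apply lg0. lia.
Qed.

End Main.

Theorem lemma5p9 (G : group) (M : G -> Prop) (Delta : G)
    (H N : G -> Prop) (delta : G) :
  garside M Delta ->
  parabolic M Delta H N delta ->
  forall (alpha beta u theta : G),
    proj M Delta H alpha beta ->
    Sgen M Delta u ->
    HN_reduced M Delta delta theta ->
    (forall x, rcoset H theta x <-> rcoset H alpha x) ->
    M theta ->
    exists beta' : G,
      proj M Delta H (gmul G alpha u) beta' /\ dist_le M Delta beta beta' 3.
Proof.
  intros hG hP. exact (main G M Delta H N delta hG hP).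
Qed.
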